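(* There exists an LCL problem $\Pi$ on undirected paths (without inputs) that can be solved in $O(\log^* n)$ rounds in the LOCAL model, but whose mending requires distance $\Theta(n)$: $\Pi$ is not $T$-mendable for any function $T$ with $T(n)=o(n)$.
   Context: A locally verifiable problem $\Pi$ on a graph family $\mathcal{G}$ is given by a set $\Gamma$ of output labels (here no inputs) and a verifier $\psi$ with verification radius $r\in\mathbb{N}$: for $G=(V,E)\in\mathcal{G}$, an output labeling $\lambda:V\to\Gamma$ and a node $v$, $\psi(G,\lambda,v)\in\{\text{happy},\text{unhappy}\}$ depends only on the radius-$r$ neighborhood of $v$ (structure and outputs, up to isomorphism). $\lambda$ is a solution if $\psi$ is happy at every node. $\Pi$ is an LCL problem if $\Gamma$ is finite and degrees are bounded by a constant. Partial labelings are maps $\lambda:V\to\Gamma\cup\{\bot\}$; the relaxed verifier $\psi^*$ is happy at $v$ if some node within distance $r$ of $v$ has label $\bot$, and otherwise $\psi^*(G,\lambda,v)=\psi(G,\lambda',v)$ for any $\lambda':V\to\Gamma$ agreeing with $\lambda$ on the radius-$r$ neighborhood of $v$; $\psi^*$ accepts $\lambda$ if it is happy at all nodes. Given $\lambda$ accepted by $\psi^*$ and a node $v$, a $t$-mend of $\lambda$ at $v$ is a partial labeling $\mu$ such that $\psi^*$ accepts $\mu$, $\mu(v)\neq\bot$, $\mu(u)=\bot$ implies $\lambda(u)=\bot$, and $\mu(u)\neq\lambda(u)$ implies $u$ is within distance $t$ of $v$. A verifier $\psi$ is $T$-mendable if for every $G\in\mathcal{G}$ with $n$ nodes, every $\lambda$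 accepted by $\psi^*$ and every node $v$, a $T(n)$-mend of $\lambda$ at $v$ exists; $\Pi$ is $T$-mendable if some radius-$r$ verifier for $\Pi$ (accepting exactly the solutions of $\Pi$) is $T$-mendable. LOCAL model: nodes are processors with unique identifiers communicating along edges in synchronous rounds with unbounded message size; a problem is solvable in $T(n)$ rounds if after $T(n)$ rounds all nodes output labels forming a valid solution. *)

(* Defs.v *)
From mathcomp Require Import all_boot.
Set Implicit Arguments. Unset Strict Implicit. Unset Printing Implicit Defensive.

(* The n-node undirected path has node set 'I_n and edges {i, i+1}. *)

Definition pdist (n : nat) (u v : 'I_n) : nat := (u - v) + (v - u).

(* Radius-t view of a node v under f : 'I_n -> A, as seen by v.
   left side, listed outward from v: f (v-1), f (v-2), ..., (at most t items)
   right side, listed outward from v: f (v+1), f (v+2), ..., (at most t items)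
   A side shorter than t reveals the end of the path.  Since the path is
   undirected, an (isomorphism-invariant) function of the view must be
   symmetric under exchanging the two sides; see [sym3]. *)
Definition leftv (A : Type) (n : nat) (f : 'I_n -> A) (t : nat) (v : 'I_n)
  : seq A := [seq f i | i : 'I_n <- rev (enum 'I_n) & (i < v) && (v <= i + t)].
Definition rightv (A : Type) (n : nat) (f : 'I_n -> A) (t : nat) (v : 'I_n)
  : seq A := [seq f i | i : 'I_n <- enum 'I_n & (v < i) && (i <= v + t)].

(* A function of a (left, center, right) view that does not depend on the
   orientation, i.e. is well defined on rooted labeled paths up to isomorphism *)
Definition sym3 (A B C : Type) (g : seq A -> B -> seq A -> C) : Prop :=
  forall L c R, g L c R = g R c L.

(* A verifier with output labels Gamma (no inputs). Its radius is given
   separately. *)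
Definition verifier (Gamma : Type) := seq Gamma -> Gamma -> seq Gamma -> bool.

Definition happy (Gamma : Type) (r : nat) (psi : verifier Gamma)
  (n : nat) (lam : 'I_n -> Gamma) (v : 'I_n) : bool :=
  psi (leftv lam r v) (lam v) (rightv lam r v).

Definition solution (Gamma : Type) (r : nat) (psi : verifier Gamma)
  (n : nat) (lam : 'I_n -> Gamma) : Prop :=
  forall v, happy r psi lam v.

(* Relaxed verifier psi^* on partial labelings (None = bottom). *)
Definition rhappy (Gamma : Type) (r : nat) (psi : verifier Gamma)
  (n : nat) (lam : 'I_n -> option Gamma) (v : 'I_n) : bool :=
  let L := leftv lam r v in
  let R := rightv lam r v in
  match lam v with
  | None => true
  | Some c =>
      if all (@isSome Gamma) L && all (@isSome Gamma) R
      then psi (pmap id L) c (pmap id R)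
      else true
  end.

Definition raccepts (Gamma : Type) (r : nat) (psi : verifier Gamma)
  (n : nat) (lam : 'I_n -> option Gamma) : Prop :=
  forall v, rhappy r psi lam v.

Definition is_mend (Gamma : Type) (r : nat) (psi : verifier Gamma)
  (n : nat) (lam : 'I_n -> option Gamma) (v : 'I_n) (t : nat)
  (mu : 'I_n -> option Gamma) : Prop :=
  [/\ raccepts r psi mu,
      mu v <> None,
      (forall u, mu u = None -> lam u = None) &
      (forall u, mu u <> lam u -> pdist u v <= t)].

Definition mendable (Gamma : Type) (r : nat) (psi : verifier Gamma)
  (T : nat -> nat) : Prop :=
  forall (n : nat) (lam : 'I_n -> option Gamma) (v : 'I_n),
    raccepts r psi lam -> exists mu, is_mend r psi lam v (T n) mu.

Definition same_problem (Gamma : Type) (r1 : nat) (psi1 : verifier Gamma)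
  (r2 : nat) (psi2 : verifier Gamma) : Prop :=
  forall (n : nat) (lam : 'I_n -> Gamma),
    solution r1 psi1 lam <-> solution r2 psi2 lam.

Definition problem_mendable (Gamma : Type) (r0 : nat) (psi0 : verifier Gamma)
  (T : nat -> nat) : Prop :=
  exists (r : nat) (psi : verifier Gamma),
    sym3 psi /\ same_problem r psi r0 psi0 /\ mendable r psi T.

(* Deterministic LOCAL algorithm on paths: after t rounds (unbounded messages)
   a node knows n and its radius-t neighborhood together with all IDs in it;
   its output is a function of this knowledge (symmetric since the path has
   no orientation). *)
Definition local_alg (Gamma : Type) := nat -> seq nat -> nat -> seq nat -> Gamma.

Definition run_alg (Gamma : Type) (A : local_alg Gamma) (t : nat)
  (n : nat) (id : 'I_n -> nat) : 'I_n -> Gamma :=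
  fun v => A n (leftv id t v) (id v) (rightv id t v).

Definition solves (Gamma : Type) (r0 : nat) (psi0 : verifier Gamma)
  (c : nat) (A : local_alg Gamma) (time : nat -> nat) : Prop :=
  forall (n : nat) (id : 'I_n -> nat),
    injective id -> (forall v, id v < n ^ c) ->
    solution r0 psi0 (run_alg A (time n) id).

Fixpoint logstar_fuel (fuel n : nat) : nat :=
  match fuel with
  | 0 => 0
  | f.+1 => if n <= 1 then 0 else (logstar_fuel f (trunc_log 2 n)).+1
  end.
Definition logstar (n : nat) : nat := logstar_fuel n n.

Definition bigO (f g : nat -> nat) : Prop :=
  exists C N, forall n, N <= n -> f n <= C * g n.

Definition little_o_n (T : nat -> nat) : Prop :=
  forall k, 0 < k -> exists N, forall n, N <= n -> k * T n <= n.

(* Main.v *)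
Require Import Defs.
From mathcomp Require Import all_boot.
From mathcomp Require Import zify.

Definition psi0 : verifier bool := fun L c R => all (eq_op c) L && all (eq_op c) R.

Lemma pmap_map (T : eqType) (G : Type) (f : T -> option G) (g : T -> G) s :
  (forall x, x \in s -> f x = Some (g x)) -> pmap id (map f s) = map g s.
Proof.
elim: s => //= x s IH H; rewrite H ?mem_head //= IH // => y ys.
by apply: H; rewrite in_cons ys orbT.
Qed.

Lemma const_sol n r c : solution r psi0 (fun _ : 'I_n => c).
Proof.
move=> v; rewrite /happy /psi0 /leftv /rightv !all_map.
by apply/andP; split; apply/allP => x _ /=.
Qed.

Lemma rhappy_win (G : eqType) r (psi : verifier G) n (lam : 'I_n -> option G) u c :
  lam u = Some c -> solution r psi (fun _ : 'I_n => c) ->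
  ((forall i : 'I_n, pdist i u <= r -> lam i <> None) ->
     forall i : 'I_n, pdist i u <= r -> lam i = Some c) ->
  rhappy r psi lam u.
Proof.
move=> Hu Hsol H; rewrite /rhappy Hu.
case: ifP => // /andP [HL HR].
have Hall : forall i : 'I_n, pdist i u <= r -> lam i <> None.
  move=> i Hi; rewrite /pdist in Hi.
  have [Hlt|Hgt|Heq] := ltngtP i u.
  - have : lam i \in leftv lam r u.
      apply: map_f; rewrite mem_filter mem_rev mem_enum andbT.
      apply/andP; split => //; lia.
    by move/(allP HL); case: (lam i).
  - have : lam i \in rightv lam r u.
      apply: map_f; rewrite mem_filter mem_enum andbT.
      apply/andP; split => //; lia.
    by move/(allP HR); case: (lam i).
  - have -> : i = u by apply: val_inj.
    by rewrite Hu.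
have H' := H Hall.
rewrite /leftv /rightv.
rewrite (@pmap_map _ _ _ (fun _ => c)); last first.
  move=> x; rewrite mem_filter mem_rev mem_enum andbT => /andP [h1 h2].
  apply: H'; rewrite /pdist; lia.
rewrite (@pmap_map _ _ _ (fun _ => c)); last first.
  move=> x; rewrite mem_filter mem_enum andbT => /andP [h1 h2].
  apply: H'; rewrite /pdist; lia.
exact: Hsol u.
Qed.

Theorem theorem7p1 :
  exists (Gamma : finType) (r0 : nat) (psi0 : verifier Gamma),
    sym3 psi0 /\
    (forall c : nat, exists (A : local_alg Gamma) (time : nat -> nat),
        (forall n, sym3 (A n)) /\ bigO time logstar /\ solves r0 psi0 c A time) /\
    (forall T : nat -> nat, little_o_n T -> ~ problem_mendable r0 psi0 T).
Proof.
exists bool, 1, psi0; split; first by move=> L c R; rewrite /psi0 andbC.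
split.
  move=> c; exists (fun _ _ _ _ => true), (fun _ => 0); split => //.
  split; first by exists 0, 0.
  move=> n id _ _; exact: const_sol.
move=> T HT [r [psi [_ [Hsame Hmend]]]].
have [N HN] := HT 4 isT.
set m := N.+1.
have Hn := HN (m + m).+1 ltac:(lia).
have HTm : T (m + m).+1 < m by lia.
pose lam : 'I_(m + m).+1 -> option bool :=
  fun i => if i < m then Some true else if i == m :> nat then None else Some false.
have Hv : m < (m + m).+1 by lia.
pose v := Ordinal Hv.
have Hacc : raccepts r psi lam.
  move=> u.
  case: (ltnP u m) => Hum.
    apply: (@rhappy_win _ _ _ _ _ _ true); first by rewrite /lam Hum.
      by apply/Hsame; apply: const_sol.
    move=> Hall i Hi.
    have Hmr : ~ (pdist v u <= r).
      by move/Hall; rewrite /lam /= ltnn eqxx.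
    rewrite /lam; have -> : i < m by rewrite /pdist /= in Hmr Hi; lia.
    done.
  case: (eqVneq (val u) m) => Hm.
    by rewrite /rhappy /lam ltnNge Hum /= Hm eqxx.
  apply: (@rhappy_win _ _ _ _ _ _ false); first by rewrite /lam ifF ?ifF //; [exact: negbTE Hm | lia].
    by apply/Hsame; apply: const_sol.
  move=> Hall i Hi.
  have Hmr : ~ (pdist v u <= r).
    by move/Hall; rewrite /lam /= ltnn eqxx.
  rewrite /lam; have -> : (i < m) = false by rewrite /pdist /= in Hmr Hi; lia.
  case: eqP => // him; exfalso; apply: Hmr; rewrite /pdist /= in Hi *; lia.
have [mu [Hmu Hmuv Hmun Hmud]] := Hmend _ lam v Hacc.
have Hsome : forall u, mu u <> None.
  move=> u Hu; have := Hmun u Hu; rewrite /lam.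
  case: ltnP => // h1; case: eqP => // h2 _.
  by apply: Hmuv; have <- : u = v by apply: val_inj.
pose mu' := fun i => odflt true (mu i).
have Hsol : solution r psi mu'.
  move=> u; have := Hmu u; rewrite /rhappy /happy.
  case E: (mu u) => [c|]; last by have := Hsome u.
  have Hal : forall s, all (@isSome bool) (map mu s).
    by move=> s; apply/allP => x /mapP [y _ ->]; case: (mu y) (Hsome y).
  rewrite /leftv /rightv !Hal /=.
  rewrite !(@pmap_map _ _ _ mu') ?/mu' ?E //;
  by move=> x _; rewrite /mu'; case: (mu x) (Hsome x).
move/Hsame: Hsol => Hsol.
have Hall : forall i (hi : i < (m + m).+1), mu' (Ordinal hi) = mu' ord0.
  elim=> [|i IH] hi; first by congr mu'; apply: val_inj.
  have hi' : i < (m + m).+1 by lia.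
  rewrite -(IH hi').
  have := Hsol (Ordinal hi'); rewrite /happy /psi0 => /andP [_ /allP HR].
  apply/esym/eqP; apply: HR; apply: map_f.
  by rewrite mem_filter mem_enum andbT /=; apply/andP; split; lia.
have H0 : mu ord0 = Some true.
  apply/eqP; apply/negPn/negP => /eqP hne.
  have Hl0 : lam ord0 = Some true by rewrite /lam.
  have hne' : mu ord0 <> lam ord0 by rewrite Hl0.
  by have := Hmud ord0 hne'; rewrite /pdist /=; lia.
have Hl : (m + m) < (m + m).+1 by [].
have H1 : mu (Ordinal Hl) = Some false.
  apply/eqP; apply/negPn/negP => /eqP hne.
  have Hl0 : lam (Ordinal Hl) = Some false.
    rewrite /lam /=; case: ifP => h; first lia.
    by case: eqP => //; lia.
  have hne' : mu (Ordinal Hl) <> lam (Ordinal Hl) by rewrite Hl0.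
  by have := Hmud _ hne'; rewrite /pdist /=; lia.
have := Hall _ Hl; rewrite /mu' H1.
by rewrite H0.
Qed.
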